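(* Fix constants $Q>0$, $T_1>0$, $T_2>0$, $0<\mu_i<\mu_o$, $0<R_1(0)<R_2(0)$, a positive integer $n$ and a time $\tau\ge0$. Put $R_0^2(\tau)=Q\tau/\pi$, $R_1^2(\tau)=Q\tau/\pi+R_1^2(0)$, $R_2^2(\tau)=Q\tau/\pi+R_2^2(0)$, $\zeta_1=R_1^2(0)/R_2^2(0)$. Let $\mu\in C^1([\zeta_1,1])$ satisfy $\mu_i<\mu(\zeta)<\mu_o$ on $[\zeta_1,1]$, and define $$F_1=\frac{Qn}{2\pi R_1^2(\tau)}\big(\mu(\zeta_1)-\mu_i\big)-T_1\frac{n^3-n}{R_1^3(\tau)},\qquad F_2=\frac{Qn}{2\pi R_2^2(\tau)}\big(\mu_o-\mu(1)\big)-T_2\frac{n^3-n}{R_2^3(\tau)}.$$ Suppose $\sigma\neq0$ and a nontrivial $f$ satisfy $$\Big(\big(\zeta R_2^2(0)+R_0^2(\tau)\big)\mu f'\Big)'-\frac{n^2R_2^4(0)}{4(\zeta R_2^2(0)+R_0^2(\tau))}\mu f=-\frac{Qn^2R_2^2(0)}{4\pi(\zeta R_2^2(0)+R_0^2(\tau))}\frac{1}{\sigma}\mu'f,\quad \zeta_1<\zeta<1,$$ $$\frac{2R_1^2(\tau)}{nR_2^2(0)}\mu(\zeta_1)f'(\zeta_1)=\Big(\mu_i-\frac{F_1}{\sigma}\Big)f(\zeta_1),\qquad -\frac{2R_2^2(\tau)}{nR_2^2(0)}\mu(1)f'(1)=\Big(\mu_o-\frac{F_2}{\sigma}\Big)f(1).$$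 Then $\sigma$ is real. Moreover, if $\sigma>0$, then $$\sigma<\max\left\{\frac{Qn}{2\pi R_1^2(\tau)}\frac{\mu(\zeta_1)-\mu_i}{\mu_i}-\frac{T_1}{\mu_i}\frac{n^3-n}{R_1^3(\tau)},\ \frac{Qn}{2\pi R_2^2(\tau)}\frac{\mu_o-\mu(1)}{\mu_o}-\frac{T_2}{\mu_o}\frac{n^3-n}{R_2^3(\tau)},\ \frac{Q}{\pi R_2^2(0)}\frac{1}{\mu_i}\sup_{\zeta\in(\zeta_1,1)}\mu'(\zeta)\right\},$$ and consequently, independently of $n$, $$\sigma<\max\left\{\frac{2T_1}{\mu_iR_1^3(\tau)}\Big(\frac{QR_1(\tau)}{6\pi T_1}(\mu(\zeta_1)-\mu_i)+\frac13\Big)^{3/2},\ \frac{2T_2}{\mu_oR_2^3(\tau)}\Big(\frac{QR_2(\tau)}{6\pi T_2}(\mu_o-\mu(1))+\frac13\Big)^{3/2},\ \frac{Q}{\pi R_2^2(0)}\frac{1}{\mu_i}\sup_{\zeta\in(\zeta_1,1)}\mu'(\zeta)\right\}.$$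
   Context: This is the eigenvalue problem for the growth rate $\sigma$ of a disturbance with angular wave number $n$ in the linear stability analysis (under a quasi-steady-state approximation) of three-layer radial Hele-Shaw flow, written in the transformed coordinate $\zeta=(r^2-R_0^2(\tau))/R_2^2(0)$ in which the interfaces are at $\zeta=\zeta_1$ and $\zeta=1$; $\mu_i,\mu_o$ are the constant inner/outer viscosities, $\mu(\zeta)$ the middle-layer viscous profile, $T_1,T_2$ the interfacial tensions and $Q$ the injection rate. *)

(* Defs.v *)
From Stdlib Require Import Reals.
From Coquelicot Require Import Coquelicot.
Open Scope R_scope.

Definition is_derive_C (f : R -> C) (x : R) (l : C) : Prop :=
  @is_derive R_AbsRing C_R_NormedModule f x l.

Definition R0sq (Q tau : R) : R := Q * tau / PI.
Definition Rt (Q Rj0 tau : R) : R := sqrt (Q * tau / PI + Rj0 ^ 2).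

(* sup_{zeta in (a,b)} g(zeta) (as a real number; finite when g is bounded) *)
Definition sup_open (g : R -> R) (a b : R) : R :=
  real (Lub_Rbar (fun y => exists z, a < z < b /\ y = g z)).

Definition F1 (Q T1 mui R1 : R) (mu : R -> R) (zeta1 : R) (n : nat) : R :=
  Q * INR n / (2 * PI * R1 ^ 2) * (mu zeta1 - mui)
  - T1 * (INR n ^ 3 - INR n) / R1 ^ 3.

Definition F2 (Q T2 muo R2 : R) (mu : R -> R) (n : nat) : R :=
  Q * INR n / (2 * PI * R2 ^ 2) * (muo - mu 1)
  - T2 * (INR n ^ 3 - INR n) / R2 ^ 3.

(* Main.v *)
Require Import Defs.
From Stdlib Require Import Reals Lra.
From Coquelicot Require Import Coquelicot.
Open Scope R_scope.

Lemma deriv_re (f : R -> C) x l : is_derive_C f x l -> is_derive (fun y => fst (f y)) x (fst l).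
Proof.
  intros H. unfold is_derive_C, is_derive in *.
  apply (filterdiff_comp' f (fun t : C_R_NormedModule => (fst t : R_NormedModule)) x _ (fun t : C_R_NormedModule => (fst t : R_NormedModule))) in H.
  - simpl in H. exact H.
  - apply filterdiff_linear. apply (@is_linear_fst R_AbsRing R_NormedModule R_NormedModule).
Qed.
Lemma deriv_im (f : R -> C) x l : is_derive_C f x l -> is_derive (fun y => snd (f y)) x (snd l).
Proof.
  intros H. unfold is_derive_C, is_derive in *.
  apply (filterdiff_comp' f (fun t : C_R_NormedModule => (snd t : R_NormedModule)) x _ (fun t : C_R_NormedModule => (snd t : R_NormedModule))) in H.
  - simpl in H. exact H.
  - apply filterdiff_linear. apply (@is_linear_snd R_AbsRing R_NormedModule R_NormedModule).
Qed.

Lemma cont_plus (f g : R -> R) x : continuous f x -> continuous g x -> continuous (fun y => f y + g y) x.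
Proof. intros; apply (@continuous_plus R_UniformSpace R_AbsRing R_NormedModule f g x); auto. Qed.
Lemma cont_mult (f g : R -> R) x : continuous f x -> continuous g x -> continuous (fun y => f y * g y) x.
Proof. intros; apply (@continuous_mult R_UniformSpace R_AbsRing f g x); auto. Qed.
Lemma cont_opp (f : R -> R) x : continuous f x -> continuous (fun y => - f y) x.
Proof. intros; apply (@continuous_opp R_UniformSpace R_AbsRing R_NormedModule f x); auto. Qed.
Lemma cont_minus (f g : R -> R) x : continuous f x -> continuous g x -> continuous (fun y => f y - g y) x.
Proof. intros; unfold Rminus; apply cont_plus; auto; apply cont_opp; auto. Qed.
Lemma cont_const (c x : R) : continuous (fun _ : R => c) x.
Proof. apply continuous_const. Qed.
Lemma cont_id (x : R) : continuous (fun y : R => y) x.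
Proof. apply continuous_id. Qed.
Lemma cont_div (f g : R -> R) x : continuous f x -> continuous g x -> g x <> 0 -> continuous (fun y => f y / g y) x.
Proof. intros; unfold Rdiv; apply cont_mult; auto; apply continuous_Rinv_comp; auto. Qed.
Lemma cont_pow (f : R -> R) x n : continuous f x -> continuous (fun y => f y ^ n) x.
Proof. intros H; induction n; simpl. apply cont_const. apply cont_mult; auto. Qed.

Lemma cont_fst (f : R -> C) x : continuous f x -> continuous (fun y => fst (f y)) x.
Proof. intros H. apply (continuous_comp f fst). exact H. destruct (f x); apply continuous_fst. Qed.
Lemma cont_snd (f : R -> C) x : continuous f x -> continuous (fun y => snd (f y)) x.
Proof. intros H. apply (continuous_comp f snd). exact H. destruct (f x); apply continuous_snd. Qed.

Lemma der_cont (f : R -> R) x l : is_derive f x l -> continuous f x.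
Proof. intros H. apply (@ex_derive_continuous R_AbsRing R_NormedModule f x). exists l. exact H. Qed.

Lemma der_mult (f g : R -> R) x df dg : is_derive f x df -> is_derive g x dg ->
  is_derive (fun y => f y * g y) x (df * g x + f x * dg).
Proof. intros. apply (is_derive_mult f g x df dg); auto. intros; apply Rmult_comm. Qed.
Lemma der_plus (f g : R -> R) x df dg : is_derive f x df -> is_derive g x dg ->
  is_derive (fun y => f y + g y) x (df + dg).
Proof. intros. apply (is_derive_plus f g x df dg); auto. Qed.
Lemma der_minus (f g : R -> R) x df dg : is_derive f x df -> is_derive g x dg ->
  is_derive (fun y => f y - g y) x (df - dg).
Proof. intros. apply (is_derive_minus f g x df dg); auto. Qed.

Lemma sup_open_ub g a b : a < b -> (forall z, a<=z<=b -> continuous g z) ->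
  forall x, a < x < b -> g x <= sup_open g a b.
Proof.
  intros Hab Hc x Hx.
  destruct (continuity_ab_maj g a b (Rlt_le _ _ Hab)) as [Mx [HM _]].
  { intros c Hc'. apply continuity_pt_filterlim. apply Hc; auto. }
  unfold sup_open.
  destruct (Lub_Rbar_correct (fun y => exists z, a < z < b /\ y = g z)) as [Hub Hlub].
  assert (H1 : Rbar_le (g x) (Lub_Rbar (fun y => exists z, a < z < b /\ y = g z))).
  { apply Hub. exists x; split; auto. }
  assert (H2 : Rbar_le (Lub_Rbar (fun y => exists z, a < z < b /\ y = g z)) (g Mx)).
  { apply Hlub. intros y [z [Hz ->]]. simpl. apply HM; lra. }
  destruct (Lub_Rbar (fun y => exists z, a < z < b /\ y = g z)); simpl in *; auto; contradiction.
Qed.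

Lemma RInt_pos_pt (g : R -> R) a b z0 : a < b ->
  (forall z, a <= z <= b -> continuous g z) -> (forall z, a <= z <= b -> 0 <= g z) ->
  a <= z0 <= b -> 0 < g z0 -> 0 < RInt g a b.
Proof.
  intros Hab Hc Hp Hz0 Hg0.
  assert (Hex : forall c d, a <= c -> c <= d -> d <= b -> ex_RInt g c d).
  { intros c d H1 H2 H3. apply (@ex_RInt_continuous R_CompleteNormedModule). intros z Hz.
    rewrite Rmin_left in Hz by lra. rewrite Rmax_right in Hz by lra. apply Hc; lra. }
  assert (Heps : 0 < g z0 / 2) by lra.
  destruct (Hc z0 Hz0 (ball (g z0) (mkposreal _ Heps)) (locally_ball _ _)) as [d Hd].
  set (c := Rmax a (z0 - d/2)). set (e := Rmin b (z0 + d/2)).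
  assert (Hd0 := cond_pos d).
  assert (Hc1 : a <= c) by apply Rmax_l.
  assert (He1 : e <= b) by apply Rmin_l.
  assert (Hcz : c <= z0) by (apply Rmax_lub; lra).
  assert (Hez : z0 <= e) by (apply Rmin_glb; lra).
  assert (Hce : c < e).
  { unfold c, e, Rmax, Rmin. destruct (Rle_dec a (z0 - d/2)); destruct (Rle_dec b (z0 + d/2)); lra. }
  assert (Hin : forall y, c <= y <= e -> g z0 / 2 < g y).
  { intros y Hy. assert (Hb : ball z0 d y).
    { change (Rabs (y - z0) < d). apply Rabs_def1.
      - assert (y <= z0 + d/2). { apply Rle_trans with e. lra. apply Rmin_r. } lra.
      - assert (z0 - d/2 <= y). { apply Rle_trans with c. apply Rmax_r. lra. } lra. }
    specialize (Hd y Hb). change (Rabs (g y - g z0) < g z0 / 2) in Hd.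
    apply Rabs_def2 in Hd. lra. }
  rewrite <- (RInt_Chasles g a c b) by (apply Hex; lra).
  rewrite <- (RInt_Chasles g c e b) by (apply Hex; lra).
  assert (H1 : 0 <= RInt g a c).
  { apply RInt_ge_0; [lra | apply Hex; lra | intros; apply Hp; lra]. }
  assert (H3 : 0 <= RInt g e b).
  { apply RInt_ge_0; [lra | apply Hex; lra | intros; apply Hp; lra]. }
  assert (H2 : RInt (fun _ => g z0 / 2) c e <= RInt g c e).
  { apply RInt_le; [lra | apply ex_RInt_const | apply Hex; lra | intros; apply Rlt_le, Hin; lra]. }
  rewrite RInt_const in H2. change (scal (e - c) (g z0 / 2)) with ((e - c) * (g z0 / 2)) in H2.
  assert (0 < (e - c) * (g z0 / 2)) by (apply Rmult_lt_0_compat; lra).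
  change (plus (RInt g a c) (plus (RInt g c e) (RInt g e b))) with
    (RInt g a c + (RInt g c e + RInt g e b)). lra.
Qed.

Lemma Rpower_3_2 y : 0 < y -> Rpower y (3/2) = y * sqrt y.
Proof.
  intros Hy. replace (3/2) with (1 + /2) by field.
  rewrite Rpower_plus, Rpower_1, Rpower_sqrt; auto.
Qed.

Lemma key_bound (T R d nn mu0 Q : R) : 0 < T -> 0 < R -> 0 < d -> 0 <= nn -> 0 < mu0 -> 0 < Q ->
  Q * nn / (2 * PI * R ^ 2) * (d / mu0) - T / mu0 * ((nn ^ 3 - nn) / R ^ 3)
  <= 2 * T / (mu0 * R ^ 3) * Rpower (Q * R / (6 * PI * T) * d + 1 / 3) (3 / 2).
Proof.
  intros HT HR Hd Hn Hm HQ.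
  assert (HPI := PI_RGT_0).
  set (y := Q * R / (6 * PI * T) * d + 1 / 3).
  assert (Hy : 0 < y).
  { unfold y. assert (0 < Q * R / (6 * PI * T) * d).
    { apply Rmult_lt_0_compat; auto. unfold Rdiv. apply Rmult_lt_0_compat.
      apply Rmult_lt_0_compat; auto. apply Rinv_0_lt_compat. apply Rmult_lt_0_compat; lra. }
    lra. }
  rewrite Rpower_3_2 by auto.
  set (x := sqrt y).
  assert (Hx : x * x = y) by (apply sqrt_sqrt; lra).
  assert (Hx0 : 0 <= x) by apply sqrt_pos.
  assert (E1 : Q * nn / (2 * PI * R ^ 2) * (d / mu0) - T / mu0 * ((nn ^ 3 - nn) / R ^ 3)
     = T / (mu0 * R ^ 3) * (3 * y * nn - nn ^ 3)).
  { unfold y. field. repeat split; try lra; apply pow_nonzero; lra. }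
  assert (E2 : 2 * T / (mu0 * R ^ 3) * (y * x) = T / (mu0 * R ^ 3) * (2 * y * x)) by (field; repeat split; try lra; try (apply pow_nonzero; lra)).
  rewrite E1, E2.
  apply Rmult_le_compat_l.
  { unfold Rdiv. apply Rmult_le_pos. lra. left; apply Rinv_0_lt_compat, Rmult_lt_0_compat; auto; apply pow_lt; auto. }
  rewrite <- Hx.
  assert (0 <= (nn - x) ^ 2 * (nn + 2 * x)) by (apply Rmult_le_pos; [apply pow2_ge_0 | lra]).
  replace (2 * (x * x) * x) with ((3 * (x * x) * nn - nn ^ 3) + (nn - x) ^ 2 * (nn + 2 * x)) by ring.
  lra.
Qed.

Lemma RInt_lin3 (f g h : R -> R) a b c1 c2 c3 :
  ex_RInt f a b -> ex_RInt g a b -> ex_RInt h a b ->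
  RInt (fun x => c1 * f x + c2 * g x + c3 * h x) a b
  = c1 * RInt f a b + c2 * RInt g a b + c3 * RInt h a b.
Proof.
  intros Hf Hg Hh.
  apply (@is_RInt_unique R_CompleteNormedModule).
  exact (@is_RInt_plus R_NormedModule _ _ a b _ _
          (@is_RInt_plus R_NormedModule _ _ a b _ _
             (@is_RInt_scal R_NormedModule f a b c1 _ (@RInt_correct R_CompleteNormedModule f a b Hf))
             (@is_RInt_scal R_NormedModule g a b c2 _ (@RInt_correct R_CompleteNormedModule g a b Hg)))
          (@is_RInt_scal R_NormedModule h a b c3 _ (@RInt_correct R_CompleteNormedModule h a b Hh))).
Qed.

Lemma RInt_lin1 (f : R -> R) a b c : ex_RInt f a b ->
  RInt (fun x => c * f x) a b = c * RInt f a b.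
Proof.
  intros Hf. exact (@RInt_scal R_CompleteNormedModule f a b c Hf).
Qed.

Lemma RInt_extR (f g : R -> R) a b : (forall x : R, Rmin a b < x < Rmax a b -> f x = g x) ->
  RInt f a b = RInt g a b.
Proof. intros H. apply RInt_ext. exact H. Qed.

Ltac cont := repeat match goal with
  | |- continuous (fun y => ?c) _ => apply cont_const
  | |- continuous (fun y => y) _ => apply cont_id
  | |- continuous (fun y => @?a y + @?b y) _ => apply (cont_plus a b)
  | |- continuous (fun y => @?a y - @?b y) _ => apply (cont_minus a b)
  | |- continuous (fun y => @?a y * @?b y) _ => apply (cont_mult a b)
  | |- continuous (fun y => @?a y / @?b y) _ => apply (cont_div a b)
  | |- continuous (fun y => - @?a y) _ => apply (cont_opp a)
  | |- continuous (fun y => @?a y ^ ?k) _ => apply (cont_pow a)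
  | |- continuous _ _ => assumption
  end.
Theorem mainTheorem2
  (Q T1 T2 mui muo R10 R20 tau : R) (n : nat)
  (mu mu' : R -> R) (sigma : C) (f f' f'' : R -> C)
  (HQ : 0 < Q) (HT1 : 0 < T1) (HT2 : 0 < T2)
  (Hmui : 0 < mui) (Hmuio : mui < muo)
  (HR10 : 0 < R10) (HR12 : R10 < R20)
  (Hn : (1 <= n)%nat) (Htau : 0 <= tau)
  (* mu in C^1([zeta1,1]) *)
  (Hmu_d : forall z, R10 ^ 2 / R20 ^ 2 <= z <= 1 -> is_derive mu z (mu' z))
  (Hmu_c : forall z, R10 ^ 2 / R20 ^ 2 <= z <= 1 -> continuous mu' z)
  (Hmu_b : forall z, R10 ^ 2 / R20 ^ 2 <= z <= 1 -> mui < mu z < muo)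
  (* f is C^2 on [zeta1,1] *)
  (Hf1 : forall z, R10 ^ 2 / R20 ^ 2 <= z <= 1 -> is_derive_C f z (f' z))
  (Hf2 : forall z, R10 ^ 2 / R20 ^ 2 <= z <= 1 -> is_derive_C f' z (f'' z))
  (Hf2c : forall z, R10 ^ 2 / R20 ^ 2 <= z <= 1 -> continuous f'' z)
  (* nontrivial eigenfunction, nonzero eigenvalue *)
  (Hfnz : exists z, R10 ^ 2 / R20 ^ 2 <= z <= 1 /\ f z <> RtoC 0)
  (Hsig : sigma <> RtoC 0)
  (* the differential equation on (zeta1, 1) *)
  (Hode : forall z, R10 ^ 2 / R20 ^ 2 < z < 1 ->
     is_derive_C
       (fun x => Cmult (RtoC ((x * R20 ^ 2 + R0sq Q tau) * mu x)) (f' x)) z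
       (Cplus
          (Cmult (RtoC (INR n ^ 2 * R20 ^ 4 / (4 * (z * R20 ^ 2 + R0sq Q tau)) * mu z))
                 (f z))
          (Cmult
             (Cmult (RtoC (- (Q * INR n ^ 2 * R20 ^ 2 /
                              (4 * PI * (z * R20 ^ 2 + R0sq Q tau)))))
                    (Cinv sigma))
             (Cmult (RtoC (mu' z)) (f z)))))
  (* boundary conditions *)
  (Hbc1 :
     Cmult (RtoC (2 * Rt Q R10 tau ^ 2 / (INR n * R20 ^ 2) * mu (R10 ^ 2 / R20 ^ 2)))
           (f' (R10 ^ 2 / R20 ^ 2))
     = Cmult (Cminus (RtoC mui)
                     (Cdiv (RtoC (F1 Q T1 mui (Rt Q R10 tau) mu (R10 ^ 2 / R20 ^ 2) n))
                           sigma))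
             (f (R10 ^ 2 / R20 ^ 2)))
  (Hbc2 :
     Cmult (RtoC (- (2 * Rt Q R20 tau ^ 2 / (INR n * R20 ^ 2)) * mu 1)) (f' 1)
     = Cmult (Cminus (RtoC muo)
                     (Cdiv (RtoC (F2 Q T2 muo (Rt Q R20 tau) mu n)) sigma))
             (f 1)) :
  Im sigma = 0 /\
  (0 < Re sigma ->
     Re sigma <
       Rmax (Rmax
         (Q * INR n / (2 * PI * Rt Q R10 tau ^ 2) * ((mu (R10 ^ 2 / R20 ^ 2) - mui) / mui)
          - T1 / mui * ((INR n ^ 3 - INR n) / Rt Q R10 tau ^ 3))
         (Q * INR n / (2 * PI * Rt Q R20 tau ^ 2) * ((muo - mu 1) / muo)
          - T2 / muo * ((INR n ^ 3 - INR n) / Rt Q R20 tau ^ 3)))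
         (Q / (PI * R20 ^ 2) * (1 / mui) * sup_open mu' (R10 ^ 2 / R20 ^ 2) 1)
   /\
     Re sigma <
       Rmax (Rmax
         (2 * T1 / (mui * Rt Q R10 tau ^ 3) *
          Rpower (Q * Rt Q R10 tau / (6 * PI * T1) * (mu (R10 ^ 2 / R20 ^ 2) - mui) + 1 / 3)
                 (3 / 2))
         (2 * T2 / (muo * Rt Q R20 tau ^ 3) *
          Rpower (Q * Rt Q R20 tau / (6 * PI * T2) * (muo - mu 1) + 1 / 3) (3 / 2)))
         (Q / (PI * R20 ^ 2) * (1 / mui) * sup_open mu' (R10 ^ 2 / R20 ^ 2) 1)).
Proof.
  assert (HPI := PI_RGT_0).
  set (z1 := R10 ^ 2 / R20 ^ 2) in *.
  assert (HR20 : 0 < R20) by lra.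
  assert (Hz1R : z1 * R20 ^ 2 = R10 ^ 2) by (unfold z1; field; lra).
  assert (HR10s : 0 < R10 ^ 2) by (apply pow_lt; lra).
  assert (HR20s : 0 < R20 ^ 2) by (apply pow_lt; lra).
  assert (Hz1 : 0 < z1 < 1).
  { split. unfold z1; apply Rdiv_lt_0_compat; auto.
    assert (R10 ^ 2 < R20 ^ 2) by (simpl; nra).
    apply (Rmult_lt_reg_r (R20 ^ 2)); auto. rewrite Hz1R. lra. }
  assert (HR0 : 0 <= R0sq Q tau).
  { unfold R0sq, Rdiv; apply Rmult_le_pos; [nra | left; apply Rinv_0_lt_compat; lra]. }
  assert (Hn1 : 1 <= INR n) by (apply (le_INR 1 n) in Hn; simpl in Hn; lra).
  assert (HRt1 : Rt Q R10 tau ^ 2 = R10 ^ 2 + R0sq Q tau).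
  { unfold Rt; rewrite pow2_sqrt; unfold R0sq in *; [ring | lra]. }
  assert (HRt2 : Rt Q R20 tau ^ 2 = R20 ^ 2 + R0sq Q tau).
  { unfold Rt; rewrite pow2_sqrt; unfold R0sq in *; [ring | lra]. }
  assert (HRt1p : 0 < Rt Q R10 tau) by (unfold Rt; apply sqrt_lt_R0; unfold R0sq in *; lra).
  assert (HRt2p : 0 < Rt Q R20 tau) by (unfold Rt; apply sqrt_lt_R0; unfold R0sq in *; lra).
  remember (Cinv sigma) as s eqn:Hs. destruct s as [al be].
  unfold Cdiv in Hbc1, Hbc2. try rewrite <- Hs in Hbc1, Hbc2.
  pose (u := fun x => fst (f x)). pose (v := fun x => snd (f x)).
  pose (u1 := fun x => fst (f' x)). pose (v1 := fun x => snd (f' x)).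
  pose (u2 := fun x => fst (f'' x)). pose (v2 := fun x => snd (f'' x)).
  pose (P := fun x => x * R20 ^ 2 + R0sq Q tau).
  pose (pm := fun x => P x * mu x).
  pose (dpm := fun x => R20 ^ 2 * mu x + P x * mu' x).
  assert (HP : forall x, z1 <= x -> 0 < P x).
  { intros x Hx. unfold P. assert (z1 * R20 ^ 2 <= x * R20 ^ 2) by (apply Rmult_le_compat_r; lra). lra. }
  assert (Du : forall z, z1 <= z <= 1 -> is_derive u z (u1 z)) by (intros; apply deriv_re; auto).
  assert (Dv : forall z, z1 <= z <= 1 -> is_derive v z (v1 z)) by (intros; apply deriv_im; auto).
  assert (Du1 : forall z, z1 <= z <= 1 -> is_derive u1 z (u2 z)) by (intros; apply deriv_re; auto).
  assert (Dv1 : forall z, z1 <= z <= 1 -> is_derive v1 z (v2 z)) by (intros; apply deriv_im; auto).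
  assert (Dpm : forall z, z1 <= z <= 1 -> is_derive pm z (dpm z)).
  { intros z Hz. assert (HdP : is_derive P z (R20 ^ 2)).
    { unfold P. auto_derive; [auto | ring]. }
    exact (der_mult _ _ z _ _ HdP (Hmu_d z Hz)). }
  assert (C : forall z, z1 <= z <= 1 -> continuous u z /\ continuous v z /\ continuous u1 z /\
     continuous v1 z /\ continuous u2 z /\ continuous v2 z /\ continuous mu z /\
     continuous mu' z /\ continuous P z /\ 0 < P z).
  { intros z Hz. repeat split.
    - exact (der_cont _ _ _ (Du z Hz)).
    - exact (der_cont _ _ _ (Dv z Hz)).
    - exact (der_cont _ _ _ (Du1 z Hz)).
    - exact (der_cont _ _ _ (Dv1 z Hz)).
    - exact (cont_fst f'' z (Hf2c z Hz)).
    - exact (cont_snd f'' z (Hf2c z Hz)).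
    - exact (der_cont _ _ _ (Hmu_d z Hz)).
    - exact (Hmu_c z Hz).
    - unfold P. cont.
    - apply HP; lra. }
  pose (A := fun x => INR n ^ 2 * R20 ^ 4 / (4 * P x)).
  pose (B := fun x => Q * INR n ^ 2 * R20 ^ 2 / (4 * PI * P x)).
  pose (sq := fun x => u x * u x + v x * v x).
  pose (h1 := fun x => pm x * (u1 x * u1 x + v1 x * v1 x)).
  pose (h2 := fun x => A x * mu x * sq x).
  pose (h3 := fun x => B x * mu' x * sq x).
  pose (h0 := fun x => A x * sq x).
  pose (W := fun x => pm x * (u x * u1 x + v x * v1 x)).
  pose (dW := fun x => dpm x * (u x * u1 x + v x * v1 x) + pm x * ((u1 x * u1 x + u x * u2 x) + (v1 x * v1 x + v x * v2 x))).
  pose (V := fun x => pm x * (v x * u1 x - u x * v1 x)).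
  pose (dV := fun x => dpm x * (v x * u1 x - u x * v1 x) + pm x * ((v1 x * u1 x + v x * u2 x) - (u1 x * v1 x + u x * v2 x))).
  assert (DW : forall z, z1 <= z <= 1 -> is_derive W z (dW z)).
  { intros z Hz. exact (der_mult _ _ z _ _ (Dpm z Hz) (der_plus _ _ z _ _ (der_mult _ _ z _ _ (Du z Hz) (Du1 z Hz)) (der_mult _ _ z _ _ (Dv z Hz) (Dv1 z Hz)))). }
  assert (DV : forall z, z1 <= z <= 1 -> is_derive V z (dV z)).
  { intros z Hz. exact (der_mult _ _ z _ _ (Dpm z Hz) (der_minus _ _ z _ _ (der_mult _ _ z _ _ (Dv z Hz) (Du1 z Hz)) (der_mult _ _ z _ _ (Du z Hz) (Dv1 z Hz)))). }
  Ltac prep C z Hz := destruct (C z Hz) as (?&?&?&?&?&?&?&?&?&?).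
  assert (CdW : forall z, z1 <= z <= 1 -> continuous dW z).
  { intros z Hz; prep C z Hz; unfold dW, dpm, pm; cont. }
  assert (CdV : forall z, z1 <= z <= 1 -> continuous dV z).
  { intros z Hz; prep C z Hz; unfold dV, dpm, pm; cont. }
  assert (Ch0 : forall z, z1 <= z <= 1 -> continuous h0 z).
  { intros z Hz; prep C z Hz; unfold h0, A, sq; cont. all: cbv beta; intro; nra. }
  assert (Ch1 : forall z, z1 <= z <= 1 -> continuous h1 z).
  { intros z Hz; prep C z Hz; unfold h1, pm; cont. }
  assert (Ch2 : forall z, z1 <= z <= 1 -> continuous h2 z).
  { intros z Hz; prep C z Hz; unfold h2, A, sq; cont. all: cbv beta; intro; nra. }
  assert (Ch3 : forall z, z1 <= z <= 1 -> continuous h3 z).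
  { intros z Hz; prep C z Hz; unfold h3, B, sq; cont. all: cbv beta; intro; nra. }
  assert (IW : forall z, z1 < z < 1 -> dW z = h1 z + h2 z - al * h3 z /\ dV z = be * h3 z).
  { intros z Hz. assert (Hz' : z1 <= z <= 1) by lra.
    pose proof (Hode z Hz) as HO.
    assert (Er := deriv_re _ _ _ HO). assert (Ei := deriv_im _ _ _ HO).
    assert (Pr : is_derive (fun y => pm y * u1 y) z (dpm z * u1 z + pm z * u2 z))
      by exact (der_mult _ _ z _ _ (Dpm z Hz') (Du1 z Hz')).
    assert (Pi : is_derive (fun y => pm y * v1 y) z (dpm z * v1 z + pm z * v2 z))
      by exact (der_mult _ _ z _ _ (Dpm z Hz') (Dv1 z Hz')).
    apply (is_derive_ext _ (fun y => pm y * u1 y)) in Er; [| intro t; unfold pm, P, u1; simpl; ring].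
    apply (is_derive_ext _ (fun y => pm y * v1 y)) in Ei; [| intro t; unfold pm, P, v1; simpl; ring].
    apply is_derive_unique in Er, Ei, Pr, Pi.
    rewrite Er in Pr. rewrite Ei in Pi.
    assert (HPz := HP z ltac:(lra)).
    split.
    - transitivity (u z * (dpm z * u1 z + pm z * u2 z) + v z * (dpm z * v1 z + pm z * v2 z)
                    + pm z * (u1 z * u1 z + v1 z * v1 z)).
      { unfold dW; ring. }
      rewrite <- Pr, <- Pi. simpl. unfold h1, h2, h3, A, B, sq, u, v, pm, P in *. field. lra.
    - transitivity (v z * (dpm z * u1 z + pm z * u2 z) - u z * (dpm z * v1 z + pm z * v2 z)).
      { unfold dV; ring. }
      rewrite <- Pr, <- Pi. simpl. unfold h1, h2, h3, A, B, sq, u, v, pm, P in *. field. lra. }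
  assert (Ex : forall g : R -> R, (forall z, z1 <= z <= 1 -> @continuous R_UniformSpace R_UniformSpace g z) -> @ex_RInt R_NormedModule g z1 1).
  { intros g Hg. apply (@ex_RInt_continuous R_CompleteNormedModule). intros z Hz.
    rewrite Rmin_left, Rmax_right in Hz by lra. auto. }
  assert (FW : RInt dW z1 1 = W 1 - W z1).
  { apply (@is_RInt_unique R_CompleteNormedModule).
    apply (@is_RInt_derive R_CompleteNormedModule W dW z1 1);
      intros x Hx; rewrite Rmin_left, Rmax_right in Hx by lra; auto. }
  assert (FV : RInt dV z1 1 = V 1 - V z1).
  { apply (@is_RInt_unique R_CompleteNormedModule).
    apply (@is_RInt_derive R_CompleteNormedModule V dV z1 1);
      intros x Hx; rewrite Rmin_left, Rmax_right in Hx by lra; auto. }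
  set (I0 := RInt h0 z1 1). set (I1 := RInt h1 z1 1).
  set (I2 := RInt h2 z1 1). set (I3 := RInt h3 z1 1).
  assert (EW : W 1 - W z1 = I1 + I2 - al * I3).
  { rewrite <- FW.
    rewrite (RInt_extR dW (fun x => 1 * h1 x + 1 * h2 x + (- al) * h3 x)).
    rewrite RInt_lin3 by (apply Ex; auto). unfold I1, I2, I3; ring.
    intros x Hx; rewrite Rmin_left, Rmax_right in Hx by lra.
    rewrite (proj1 (IW x Hx)). ring. }
  assert (EV : V 1 - V z1 = be * I3).
  { rewrite <- FV.
    rewrite (RInt_extR dV (fun x => 0 * h1 x + 0 * h2 x + be * h3 x)).
    rewrite RInt_lin3 by (apply Ex; auto). unfold I1, I2, I3; ring.
    intros x Hx; rewrite Rmin_left, Rmax_right in Hx by lra.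
    rewrite (proj2 (IW x Hx)). ring. }
  assert (Hnz : INR n <> 0) by lra.
  assert (B1 : W 1 = -(INR n * R20 ^ 2 / 2) * (muo - F2 Q T2 muo (Rt Q R20 tau) mu n * al) * sq 1
            /\ V 1 = -(INR n * R20 ^ 2 / 2) * F2 Q T2 muo (Rt Q R20 tau) mu n * be * sq 1).
  { pose proof (f_equal fst Hbc2) as E1. pose proof (f_equal snd Hbc2) as E2. cbv beta delta [Cmult Cplus Copp Cminus RtoC] in E1, E2; cbn [fst snd] in E1, E2.
    match type of E1 with ?L1 = ?R1 => match type of E2 with ?L2 = ?R2 =>
      assert (K1 : - W 1 = INR n * R20 ^ 2 / 2 * (u 1 * L1 + v 1 * L2));
      [ unfold W, pm, P, u, v, u1, v1; rewrite HRt2; field; lra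
      | assert (K2 : - V 1 = INR n * R20 ^ 2 / 2 * (v 1 * L1 - u 1 * L2));
        [ unfold V, pm, P, u, v, u1, v1; rewrite HRt2; field; lra
        | rewrite E1, E2 in K1, K2 ] ] end end.
    unfold sq, u, v in K1, K2 |- *. cbv beta in K1, K2 |- *.
    split; [rewrite <- (Ropp_involutive (W 1)), K1 | rewrite <- (Ropp_involutive (V 1)), K2]; ring. }
  assert (B0 : W z1 = (INR n * R20 ^ 2 / 2) * (mui - F1 Q T1 mui (Rt Q R10 tau) mu z1 n * al) * sq z1
            /\ V z1 = (INR n * R20 ^ 2 / 2) * F1 Q T1 mui (Rt Q R10 tau) mu z1 n * be * sq z1).
  { pose proof (f_equal fst Hbc1) as E1. pose proof (f_equal snd Hbc1) as E2. cbv beta delta [Cmult Cplus Copp Cminus RtoC] in E1, E2; cbn [fst snd] in E1, E2.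
    match type of E1 with ?L1 = ?R1 => match type of E2 with ?L2 = ?R2 =>
      assert (K1 : W z1 = INR n * R20 ^ 2 / 2 * (u z1 * L1 + v z1 * L2));
      [ unfold W, pm, P, u, v, u1, v1; rewrite HRt1, Hz1R; field; lra
      | assert (K2 : V z1 = INR n * R20 ^ 2 / 2 * (v z1 * L1 - u z1 * L2));
        [ unfold V, pm, P, u, v, u1, v1; rewrite HRt1, Hz1R; field; lra
        | rewrite E1, E2 in K1, K2 ] ] end end.
    unfold sq, u, v in K1, K2 |- *. cbv beta in K1, K2 |- *.
    split; [rewrite K1 | rewrite K2]; ring. }
  destruct Hfnz as [z0 [Hz0 Hfz0]].
  assert (Hsq0 : 0 < sq z0).
  { unfold sq, u, v. destruct (f z0) as [a b] eqn:E. cbn [fst snd].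
    destruct (Req_dec a 0) as [Ha|Ha]; destruct (Req_dec b 0) as [Hb|Hb].
    - subst. exfalso. apply Hfz0. reflexivity.
    - assert (0 < b * b) by exact (Rsqr_pos_lt b Hb). nra.
    - assert (0 < a * a) by exact (Rsqr_pos_lt a Ha). nra.
    - assert (0 < a * a) by exact (Rsqr_pos_lt a Ha). nra. }
  assert (Hsqnn : forall x, 0 <= sq x) by (intros; unfold sq; nra).
  assert (HA : forall x, z1 <= x -> 0 < A x).
  { intros x Hx. unfold A. apply Rdiv_lt_0_compat.
    apply Rmult_lt_0_compat; apply pow_lt; lra. specialize (HP x Hx); lra. }
  assert (Ipos : 0 < I2 - mui * I0).
  { assert (H : RInt (fun x => 0 * h1 x + 1 * h2 x + (- mui) * h0 x) z1 1 = I2 - mui * I0 :> R).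
    { rewrite RInt_lin3 by (apply Ex; auto). unfold I0, I2. ring. }
    rewrite <- H. rewrite (RInt_extR _ (fun x => A x * (mu x - mui) * sq x));
      [ | intros x Hx; unfold h1, h2, h0; ring].
    apply (RInt_pos_pt _ z1 1 z0); try lra.
    { intros z Hz; prep C z Hz; unfold A, sq; cont; cbv beta; intro; nra. }
    { intros z Hz. apply Rmult_le_pos; [apply Rmult_le_pos; [left; apply HA; lra | specialize (Hmu_b z Hz); lra] | apply Hsqnn]. }
    { apply Rmult_lt_0_compat; [apply Rmult_lt_0_compat; [apply HA; lra | specialize (Hmu_b z0 Hz0); lra] | auto]. } }
  assert (I0nn : 0 <= I0).
  { apply RInt_ge_0; [lra | apply Ex; auto | intros x Hx; unfold h0; apply Rmult_le_pos; [left; apply HA; lra | auto]]. }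
  assert (I1nn : 0 <= I1).
  { apply RInt_ge_0; [lra | apply Ex; auto | intros x Hx; unfold h1, pm].
    apply Rmult_le_pos; [apply Rmult_le_pos; [left; apply HP; lra | specialize (Hmu_b x ltac:(lra)); lra] | nra]. }
  set (S := sup_open mu' z1 1). set (cq := Q / (PI * R20 ^ 2)).
  assert (HS : forall x, z1 < x < 1 -> mu' x <= S) by (intros; apply sup_open_ub; auto; lra).
  assert (I3b : I3 <= S * cq * I0).
  { unfold I3, I0. rewrite <- RInt_lin1 by (apply Ex; auto).
    apply RInt_le; [lra | apply Ex; auto | apply Ex; intros; apply (cont_mult (fun _ => S * cq) h0); [apply cont_const | auto] | ].
    intros x Hx. assert (HPx := HP x ltac:(lra)).
    assert (HBx : B x = cq * A x) by (unfold B, A, cq; field; lra).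
    unfold h3, h0. rewrite HBx.
    assert (0 <= cq * A x * sq x).
    { apply Rmult_le_pos; [apply Rmult_le_pos; [unfold cq; apply Rlt_le, Rdiv_lt_0_compat; nra | left; apply HA; lra] | auto]. }
    replace (cq * A x * mu' x * sq x) with ((cq * A x * sq x) * mu' x) by ring.
    replace (S * cq * (A x * sq x)) with ((cq * A x * sq x) * S) by ring.
    apply Rmult_le_compat_l; auto. }
  destruct B1 as [W1 V1]; destruct B0 as [W0 V0].
  rewrite W1, W0 in EW. rewrite V1, V0 in EV.
  set (k := INR n * R20 ^ 2 / 2) in *.
  set (F1v := F1 Q T1 mui (Rt Q R10 tau) mu z1 n) in *.
  set (F2v := F2 Q T2 muo (Rt Q R20 tau) mu n) in *.
  set (A1 := sq z1) in *. set (A2 := sq 1) in *.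
  assert (Hk : 0 < k) by (unfold k; nra).
  assert (HA1 : 0 <= A1) by apply Hsqnn. assert (HA2 : 0 <= A2) by apply Hsqnn.
  set (K := k * (muo * A2 + mui * A1) + I1 + I2).
  set (L := k * (F2v * A2 + F1v * A1) + I3).
  assert (HK : K = al * L).
  { apply Rminus_diag_uniq. unfold K, L.
    transitivity (I1 + I2 - al * I3 - (- k * (muo - F2v * al) * A2 - k * (mui - F1v * al) * A1)); [ring|].
    rewrite <- EW. ring. }
  assert (HV : be * L = 0).
  { unfold L. transitivity (be * I3 - (- k * F2v * be * A2 - k * F1v * be * A1)); [ring|].
    rewrite <- EV. ring. }
  assert (Kpos : 0 < K).
  { unfold K. assert (0 <= k * (muo * A2 + mui * A1)) by (apply Rmult_le_pos; nra). nra. }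
  assert (Hbe : be = 0).
  { destruct (Req_dec be 0) as [|Hb]; auto. exfalso.
    apply Rmult_integral in HV. destruct HV as [HV|HV]; [contradiction|].
    rewrite HV in HK. lra. }
  pose proof (Cinv_r sigma Hsig) as Hinv. rewrite <- Hs in Hinv.
  destruct sigma as [sr si].
  pose proof (f_equal fst Hinv) as Hi1. pose proof (f_equal snd Hinv) as Hi2.
  cbv beta delta [Cmult RtoC] in Hi1, Hi2. cbn [fst snd] in Hi1, Hi2.
  rewrite Hbe in Hi1, Hi2.
  assert (Hal : al <> 0) by (intro; subst al; lra).
  assert (Hsi : si = 0).
  { assert (si * al = 0) by lra. apply Rmult_integral in H. destruct H; [auto | contradiction]. }
  change (Im (sr, si)) with si. change (Re (sr, si)) with sr.
  split; [exact Hsi|].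
  intros Hpos.
  assert (Hsal : sr * al = 1) by lra.
  assert (HL : L = sr * K).
  { rewrite HK. replace (sr * (al * L)) with ((sr * al) * L) by ring. rewrite Hsal. ring. }
  match goal with |- _ < Rmax (Rmax ?a1 ?a2) ?a3 /\ _ < Rmax (Rmax ?c1 ?c2) _ =>
    set (t1 := a1); set (t2 := a2); set (t3 := a3); set (b1 := c1); set (b2 := c2) end.
  assert (Ht1 : F1v = mui * t1).
  { unfold F1v, F1, t1. field. repeat split; try lra; apply pow_nonzero; lra. }
  assert (Ht2 : F2v = muo * t2).
  { unfold F2v, F2, t2. field. repeat split; try lra; apply pow_nonzero; lra. }
  assert (Ht3 : S * cq = mui * t3).
  { unfold t3, cq. field. lra. }
  set (M := Rmax (Rmax t1 t2) t3).
  assert (M1 : t1 <= M) by (unfold M; eapply Rle_trans; [apply Rmax_l | apply Rmax_l]).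
  assert (M2 : t2 <= M) by (unfold M; eapply Rle_trans; [apply Rmax_r | apply Rmax_l]).
  assert (M3 : t3 <= M) by (unfold M; apply Rmax_r).
  set (X := k * muo * A2 + k * mui * A1 + mui * I0).
  assert (Mb : L <= M * X).
  { assert (e1 : k * muo * A2 * t2 <= k * muo * A2 * M) by (apply Rmult_le_compat_l; [apply Rmult_le_pos; nra | auto]).
    assert (e2 : k * mui * A1 * t1 <= k * mui * A1 * M) by (apply Rmult_le_compat_l; [apply Rmult_le_pos; nra | auto]).
    assert (e3 : mui * I0 * t3 <= mui * I0 * M) by (apply Rmult_le_compat_l; [nra | auto]).
    assert (e4 : L <= k * muo * A2 * t2 + k * mui * A1 * t1 + mui * I0 * t3).
    { unfold L. rewrite Ht1, Ht2.
      assert (S * cq * I0 = mui * I0 * t3) by (rewrite Ht3; ring).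
      assert (k * (muo * t2 * A2 + mui * t1 * A1) = k * muo * A2 * t2 + k * mui * A1 * t1) by ring.
      lra. }
    assert (M * X = k * muo * A2 * M + k * mui * A1 * M + mui * I0 * M) by (unfold X; ring).
    lra. }
  assert (KX : X < K).
  { unfold X, K. assert (k * (muo * A2 + mui * A1) = k * muo * A2 + k * mui * A1) by ring. lra. }
  assert (X0 : 0 <= X).
  { unfold X. assert (0 <= k * muo * A2) by (apply Rmult_le_pos; nra).
    assert (0 <= k * mui * A1) by (apply Rmult_le_pos; nra). nra. }
  assert (Hmain : sr < M).
  { destruct (Rlt_le_dec sr M) as [|Hge]; auto. exfalso.
    assert (sr * X < sr * K) by (apply Rmult_lt_compat_l; auto).
    assert (M * X <= sr * X) by (apply Rmult_le_compat_r; auto).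
    lra. }
  split; [exact Hmain|].
  assert (Hb1 : t1 <= b1).
  { unfold t1, b1. specialize (Hmu_b z1 ltac:(lra)). apply key_bound; lra. }
  assert (Hb2 : t2 <= b2).
  { unfold t2, b2. specialize (Hmu_b 1 ltac:(lra)). apply key_bound; lra. }
  unfold M in Hmain. unfold Rmax in *.
  repeat match goal with
  | H : context [Rle_dec ?a ?b] |- _ => destruct (Rle_dec a b)
  | |- context [Rle_dec ?a ?b] => destruct (Rle_dec a b)
  end; lra.
Qed.
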